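(* Let $\alpha\in\mathbb{F}_q^*$ and let $\mu\in\mathbb{F}_q[X]\cap\mathbb{F}[X]^0$ be of degree $d$. (a) Suppose $\mu=\mu^{*\alpha}$. If $\zeta^2\ne\alpha$ for every root $\zeta\in\mathbb{F}$ of $\mu$, then $d=2e$ is even and the product of the roots of $\mu$ equals $\alpha^e$. If $\mu=\mu^{*\alpha}$ and $\mu$ is irreducible in $\mathbb{F}_q[X]$, then one of the following occurs: (I) there is $\zeta\in\mathbb{F}_q$ with $\alpha=\zeta^2$, $\mu=X-\zeta$ and $\mu'=X+\zeta$; (II) there is $\zeta\in\mathbb{F}_{q^2}\setminus\mathbb{F}_q$ with $\alpha=\zeta^2$ and $\mu=X^2-\alpha=\mu'$; (III) there is $\zeta\in\mathbb{F}_{q^2}\setminus\mathbb{F}_q$ with $\alpha=-\zeta^2$ and $\mu=X^2+\alpha=\mu'$; (IV) for all roots $\zeta\in\mathbb{F}$ of $\mu$ we have $\alpha\ne\pm\zeta^2$; in this case $d=2e$ is even, $\zeta^{q^e}=\alpha\zeta^{-1}$ for each root $\zeta$, and $\mu\ne\mu'$ if $q$ is odd. Cases (II) and (III) only occur if $q$ is odd. (b) If $\mu$ is irreducible, $d$ and $q$ are odd, and $\mu'=\mu^{*\alpha}$, then $-\alpha$ is a square in $\mathbb{F}_q$.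
   Context: $\mathbb{F}$ is an algebraic closure of $\mathbb{F}_p$ and $q$ is a power of $p$. $\mathbb{F}[X]^0$ is the set of monic separable polynomials over $\mathbb{F}$ with non-zero constant coefficient. For $\mu\in\mathbb{F}[X]^0$: $\mu'$ is the element of $\mathbb{F}[X]^0$ whose roots are the negatives of the roots of $\mu$; $\mu^{*\alpha}$ is the element of $\mathbb{F}[X]^0$ whose roots are $\alpha\zeta^{-1}$ for the roots $\zeta$ of $\mu$. *)

(* Defs.v *)
From HB Require Import structures.
From mathcomp Require Import all_boot all_order all_algebra all_field.
Set Implicit Arguments. Unset Strict Implicit. Unset Printing Implicit Defensive.
Import GRing.Theory.
Local Open Scope ring_scope.

Section Defs.
Variable F : closedFieldType.

Definition Fsub (m : nat) : pred F := [pred x | x ^+ m == x].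

Definition inFX0 (mu : {poly F}) : Prop :=
  [/\ mu \is monic, separable_poly mu & mu`_0 != 0].

(* A (chosen) list of the roots of mu, with multiplicity:
   mu = lead_coef mu *: \prod_(z <- roots_of mu) ('X - z%:P). *)
Definition roots_of (mu : {poly F}) : seq F := sval (closed_field_poly_normal mu).

(* mu' : the monic polynomial whose roots are the negatives of those of mu. *)
Definition negpoly (mu : {poly F}) : {poly F} :=
  \prod_(z <- roots_of mu) ('X - (- z)%:P).

(* mu^{*alpha} : the monic polynomial whose roots are alpha * z^-1. *)
Definition starpoly (alpha : F) (mu : {poly F}) : {poly F} :=
  \prod_(z <- roots_of mu) ('X - (alpha * z^-1)%:P).

Definition irreducible_over (S : pred F) (mu : {poly F}) : Prop :=
  (1 < size mu)%N /\
  forall g h : {poly F}, (forall i, g`_i \in S) -> (forall i, h`_i \in S) ->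
    mu = g * h -> size g = 1%N \/ size h = 1%N.
End Defs.

(* Main.v *)
Require Import Defs.
From HB Require Import structures.
From mathcomp Require Import all_boot all_order all_algebra all_field.
From mathcomp Require Import ring zify.
Import GRing.Theory.
Local Open Scope ring_scope.
Set Implicit Arguments. Unset Strict Implicit. Unset Printing Implicit Defensive.

Section Frob.
Variables (F : closedFieldType) (p : nat).
Hypothesis charF : p \in [pchar F].

Lemma pnat_pow m : [pchar F].-nat (p ^ m)%N.
Proof.
rewrite pnatX; apply/orP; left.
by rewrite (eq_pnat _ (pcharf_eq charF)) pnat_id // (pcharf_prime charF).
Qed.

Definition frob m (x : F) := x ^+ (p ^ m).

Lemma frob_nmod m : nmod_morphism (frob m).
Proof.
split; rewrite /frob; first by rewrite expr0n expn_eq0 eqn0Ngt (prime_gt0 (pcharf_prime charF)).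
by move=> x y; rewrite exprDn_pchar // pnat_pow.
Qed.

Lemma frob_monoid m : monoid_morphism (frob m).
Proof. by split; rewrite /frob ?expr1n // => x y; rewrite exprMn. Qed.

HB.instance Definition _ m := GRing.isNmodMorphism.Build F F (frob m) (frob_nmod m).
HB.instance Definition _ m := GRing.isMonoidMorphism.Build F F (frob m) (frob_monoid m).

Lemma frobE m x : frob m x = x ^+ (p ^ m). Proof. by []. Qed.

Variable n : nat.
Local Notation q := (p ^ n)%N.

Lemma FsubE m (x : F) : (x \in @Fsub F m) = (x ^+ m == x). Proof. by []. Qed.

Lemma qpow i (x : F) : x ^+ (q ^ i) = frob (n * i) x.
Proof. by rewrite /frob expnM. Qed.

Lemma pw (x : F) i j : (x ^+ (q ^ i)) ^+ (q ^ j) = x ^+ (q ^ (i + j)).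
Proof. by rewrite -exprM -expnD. Qed.

Lemma fix_pow (x : F) : x ^+ q = x -> forall i, x ^+ (q ^ i) = x.
Proof.
move=> hx; elim=> [|i IH]; first by rewrite expn0 expr1.
by rewrite -addn1 -pw IH expn1.
Qed.

Lemma negq (x : F) i : (- x) ^+ (q ^ i) = - (x ^+ (q ^ i)).
Proof. by rewrite exprNn_pchar // -expnM pnat_pow. Qed.

Lemma map_frob_fix (mu : {poly F}) : (forall i, mu`_i \in @Fsub F q) ->
  map_poly (frob n) mu = mu.
Proof. by move=> hmu; apply/polyP => i; rewrite coef_map /frob; apply/eqP; exact: (hmu i). Qed.

Lemma root_frob (mu : {poly F}) : (forall i, mu`_i \in @Fsub F q) ->
  forall z, root mu z -> root mu (z ^+ q).
Proof.
move=> hmu z rz.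
by rewrite /root -[z ^+ _]/(frob n z) -(map_frob_fix hmu) horner_map (eqP rz) rmorph0.
Qed.

Lemma root_frobn (mu : {poly F}) : (forall i, mu`_i \in @Fsub F q) ->
  forall z, root mu z -> forall i, root mu (z ^+ (q ^ i)).
Proof.
move=> hmu z rz; elim=> [|i IH]; first by rewrite expn0 expr1.
by rewrite -addn1 -pw expn1; apply: root_frob.
Qed.

Lemma divp_Fq (mu g : {poly F}) : (forall i, mu`_i \in @Fsub F q) ->
  (forall i, g`_i \in @Fsub F q) -> forall i, (mu %/ g)`_i \in @Fsub F q.
Proof.
move=> hmu hg i; rewrite FsubE -[_ ^+ q]/(frob n _) -coef_map map_divp.
by rewrite !map_frob_fix.
Qed.
End Frob.

Section Roots.
Variable F : closedFieldType.

Lemma rootsE (mu : {poly F}) : mu \is monic ->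
  mu = \prod_(z <- roots_of mu) ('X - z%:P).
Proof.
move=> mm; rewrite /roots_of; case: (closed_field_poly_normal mu) => r /= h.
by rewrite {1}h (monicP mm) scale1r.
Qed.

Lemma root_roots (mu : {poly F}) x : mu \is monic -> root mu x = (x \in roots_of mu).
Proof. by move=> mm; rewrite {1}(rootsE mm) root_prod_XsubC. Qed.

Lemma size_roots (mu : {poly F}) : mu \is monic -> size (roots_of mu) = (size mu).-1.
Proof. by move=> mm; rewrite {2}(rootsE mm) size_prod_XsubC. Qed.

Lemma uniq_roots_of (mu : {poly F}) : mu \is monic -> separable_poly mu -> uniq (roots_of mu).
Proof. by move=> mm; rewrite {1}(rootsE mm) separable_prod_XsubC. Qed.

Lemma starpolyE alpha (mu : {poly F}) :
  starpoly alpha mu = \prod_(w <- [seq alpha * z^-1 | z <- roots_of mu]) ('X - w%:P).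
Proof. by rewrite big_map. Qed.

Lemma negpolyE (mu : {poly F}) :
  negpoly mu = \prod_(w <- [seq - z | z <- roots_of mu]) ('X - w%:P).
Proof. by rewrite big_map. Qed.
End Roots.


Section Orbit.
Variables (F : closedFieldType) (p n : nat).
Hypothesis charF : p \in [pchar F].
Local Notation q := (p ^ n)%N.

Lemma orbit (mu : {poly F}) :
  (forall i, mu`_i \in @Fsub F q) -> mu \is monic -> separable_poly mu ->
  irreducible_over (@Fsub F q) mu ->
  forall z, root mu z -> (exists k, (0 < k)%N /\ z ^+ (p ^ k) = z) ->
  [/\ z ^+ (q ^ (size mu).-1) = z,
      (forall m, z ^+ (q ^ m) = z -> ((size mu).-1 %| m)%N) &
      perm_eq (roots_of mu) [seq z ^+ (q ^ i) | i <- iota 0 (size mu).-1]].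
Proof.
move=> hmu mm sep [_ irr] z rz [k0 [k0pos hk0]].
have hex : exists k, (0 < k)%N && (z ^+ (q ^ k) == z).
  exists k0; rewrite k0pos /=; apply/eqP.
  have h : forall j, z ^+ (p ^ (k0 * j)) = z.
    elim=> [|j IH]; first by rewrite muln0 expn0 expr1.
    by rewrite mulnS expnD exprM hk0 IH.
  by rewrite -expnM mulnC h.
case: (ex_minnP hex) => k /andP[kpos /eqP zk] kmin.
have zmul : forall a, z ^+ (q ^ (k * a)) = z.
  elim=> [|a IH]; first by rewrite muln0 expn0 expr1.
  by rewrite mulnS -pw zk IH.
have zmod : forall m, z ^+ (q ^ m) = z ^+ (q ^ (m %% k)).
  by move=> m; rewrite {1}(divn_eq m k) -pw mulnC zmul.
have period : forall m, z ^+ (q ^ m) = z -> (k %| m)%N.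
  move=> m hm; rewrite /dvdn; case: (posnP (m %% k)) => [//|pos].
  have := kmin (m %% k)%N; rewrite pos -zmod hm eqxx => /(_ isT).
  by rewrite leqNgt ltn_mod kpos.
pose orb := [seq z ^+ (q ^ i) | i <- iota 0 k].
have key : forall i j, (i < j < k)%N -> z ^+ (q ^ i) != z ^+ (q ^ j).
  move=> i j /andP[ij jk]; apply/eqP => e.
  have : z ^+ (q ^ (i + (k - j))) = z by rewrite -pw e pw subnKC // ltnW.
  move/period => dv.
  have lt1 : (0 < i + (k - j))%N by rewrite addn_gt0 subn_gt0 jk orbT.
  have := dvdn_leq lt1 dv; lia.
have uorb : uniq orb.
  rewrite map_inj_in_uniq ?iota_uniq // => i j; rewrite !mem_iota !add0n.
  move=> /andP[_ hi] /andP[_ hj] e.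
  case: (ltngtP i j) => // [ij|ji].
    by move: (key i j); rewrite ij hj e eqxx => /(_ isT).
  by move: (key j i); rewrite ji hi e eqxx => /(_ isT).
have rorb : all (root mu) orb.
  by apply/allP => w /mapP[i _ ->]; exact: root_frobn.
have [h hmug] := uniq_roots_prod_XsubC rorb (introT idP (etrans (uniq_rootsE orb) uorb)).
set g := \prod_(w <- orb) ('X - w%:P) in hmug.
have mong : g \is monic by apply: monic_prod_XsubC.
have g0 : g != 0 by rewrite monic_neq0.
have hg : forall i, g`_i \in @Fsub F q.
  have mg : map_poly (frob p n) g = g.
    rewrite /g rmorph_prod.
    rewrite /=; under eq_bigr do rewrite map_polyXsubC.
    rewrite -(big_map (frob p n) xpredT (fun w => 'X - w%:P)).
    apply: perm_big.
    rewrite /orb -map_comp.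
    have e1 : [seq (frob p n \o (fun i => z ^+ (q ^ i))) i | i <- iota 0 k] =
              [seq z ^+ (q ^ i) | i <- iota 1 k].
      rewrite -[1%N]addn0 iotaDl -map_comp; apply: eq_map => i /=.
      by rewrite /frob -[(p ^ n)%N]expn1 pw addnC.
    rewrite e1; case: (k) kpos zk => // k' _ zk.
    rewrite perm_sym -(perm_rot 1) rot1_cons -[k'.+1]addn1 iotaD map_cat cats1 /= expn0 expr1 add1n zk.
    done.
  move=> i; rewrite FsubE -[_ ^+ q]/(frob p n _) -coef_map mg.
  done.
have hh : forall i, h`_i \in @Fsub F q.
  have -> : h = mu %/ g by rewrite hmug mulpK.
  exact: divp_Fq.
have sg : size g = k.+1 by rewrite size_prod_XsubC size_map size_iota.
have h1 : h = 1.
  case: (irr h g hh hg hmug) => [sh|]; last by rewrite sg; case: (k) kpos.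
  have hm : h \is monic by rewrite -(monicMr _ mong) -hmug.
  rewrite (size1_polyC (eq_leq sh)).
  by move: hm; rewrite monicE lead_coefE sh => /eqP ->.
have mug : mu = g by rewrite hmug h1 mul1r.
have dk : (size mu).-1 = k by rewrite mug sg.
rewrite dk; split => //.
apply: uniq_perm => //; first exact: uniq_roots_of.
by move=> x; rewrite -root_roots // mug root_prod_XsubC.
Qed.
End Orbit.


Lemma inv2 (F : fieldType) (alpha y : F) : alpha != 0 -> y != 0 -> alpha / (alpha / y) = y.
Proof. by move=> a y0; rewrite invf_div mulrC divfK. Qed.

Lemma invol_pairs (F : fieldType) (alpha : F) (s : seq F) : alpha != 0 -> uniq s ->
  (forall z, z \in s -> z != 0) -> (forall z, z \in s -> alpha / z \in s) ->
  (forall z, z \in s -> alpha / z != z) ->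
  exists e, size s = (2 * e)%N /\ \prod_(z <- s) z = alpha ^+ e.
Proof.
move=> a0; have [N] := ubnP (size s); elim: N s => // N IH s sN us nz cl ne.
case: s sN us nz cl ne => [|z s'] sN us nz cl ne; first by exists 0%N; rewrite big_nil expr0.
set w := alpha / z.
have z0 : z != 0 by apply: nz; exact: mem_head.
have ws' : w \in s'.
  have := cl z (mem_head _ _); rewrite inE => /orP[/eqP e|//].
  by move: (ne z (mem_head _ _)); rewrite /w in e *; rewrite e eqxx.
move: us => /= /andP[zs' us'].
have pr : perm_eq s' (w :: rem w s') := perm_to_rem ws'.
have [|||||e' [se' pe']] := IH (rem w s').
- rewrite size_rem //; move: sN => /=; case: (size s') ws' => // m _; lia.
- exact: rem_uniq.
- by move=> y; rewrite mem_rem_uniq // => /andP[_ ys]; apply: nz; rewrite inE ys orbT.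
- move=> y; rewrite mem_rem_uniq // => /andP[yw ys].
  have y0 : y != 0 by apply: nz; rewrite inE ys orbT.
  have := cl y; rewrite inE ys orbT => /(_ isT); rewrite inE => /orP[/eqP e|ays].
    by move: yw; rewrite /w -e inv2 // eqxx.
  rewrite mem_rem_uniq // inE ays andbT; apply/eqP => e.
  have yz : y = z by rewrite -(inv2 a0 y0) e /w inv2.
  by move: zs'; rewrite -yz ys.
- by move=> y; rewrite mem_rem_uniq // => /andP[_ ys]; apply: ne; rewrite inE ys orbT.
exists e'.+1; split.
  by rewrite /= (perm_size pr) /= se'; lia.
rewrite big_cons (perm_big _ pr) big_cons pe' mulrA /w [z * _]mulrC.
by rewrite divfK // exprS.
Qed.


Section Aux.
Variables (F : closedFieldType) (p n : nat).
Hypothesis charF : p \in [pchar F].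
Hypothesis n_gt0 : (0 < n)%N.
Local Notation q := (p ^ n)%N.

Lemma negq1 (x : F) : (- x) ^+ q = - (x ^+ q).
Proof. by rewrite exprNn_pchar // pnat_pow. Qed.

Lemma sq_pm (z : F) : (z ^+ 2) ^+ q = z ^+ 2 -> z ^+ q = z \/ z ^+ q = - z.
Proof.
move=> h; have h2 : (z ^+ q) ^+ 2 = z ^+ 2 by rewrite exprAC.
by move/eqP: h2; rewrite eqf_sqr => /orP[/eqP|/eqP]; [left|right].
Qed.

Lemma two_nz : odd q -> (2%:R : F) != 0.
Proof.
move=> oq; apply/negP => /eqP h2.
have : (p %| 2)%N by rewrite (dvdn_pcharf charF) h2.
move/dvdn_leq => /(_ isT) p2; have p1 := prime_gt1 (pcharf_prime charF).
have ep : p = 2%N by lia.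
by move: oq; rewrite ep oddX /= orbF eqn0Ngt n_gt0.
Qed.

Lemma two0 : ~~ odd q -> (2%:R : F) = 0.
Proof.
move=> eq; case: (even_prime (pcharf_prime charF)) => [p2|op].
  by rewrite -p2; exact: (pcharf0 charF).
by move: eq; rewrite oddX op orbT.
Qed.
End Aux.

Lemma XX (F : fieldType) (z : F) : ('X - z%:P) * ('X - (- z)%:P) = 'X^2 - (z ^+ 2)%:P.
Proof. by rewrite polyCN opprK rmorphXn /=; ring. Qed.

Unset Implicit Arguments. Set Strict Implicit.

Lemma ar1 c e i : i = (c * e)%N -> (i < 2 * e)%N -> c = 0%N \/ c = 1%N.
Proof. move=> ->; case: c => [|[|c]]; [by left|by right|]; rewrite !mulSn; lia. Qed.

Lemma ar2 d : (1 < d)%N -> (d <= 2)%N -> d = 2%N.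
Proof. lia. Qed.

Theorem lemma4p1 (F : closedFieldType) (p n : nat)
  (charF : p \in [pchar F])
  (algF : forall x : F, exists k : nat, (0 < k)%N /\ x ^+ (p ^ k) = x)
  (n_gt0 : (0 < n)%N)
  (alpha : F) (alpha_Fq : alpha \in @Fsub F (p ^ n)) (alpha_neq0 : alpha != 0)
  (mu : {poly F}) (mu_Fq : forall i, mu`_i \in @Fsub F (p ^ n)) (mu_0 : inFX0 mu) :
  let q := (p ^ n)%N in
  let d := (size mu).-1 in
  let Fq := @Fsub F q in
  let Fq2 := @Fsub F (q ^ 2) in
  (* (a), first claim *)
  (starpoly alpha mu = mu ->
     (forall z, root mu z -> z ^+ 2 != alpha) ->
     exists e : nat, d = (2 * e)%N /\ \prod_(z <- roots_of mu) z = alpha ^+ e)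
  /\
  (* (a), classification *)
  (starpoly alpha mu = mu -> irreducible_over Fq mu ->
     let caseII := exists z, [/\ z \in Fq2, z \notin Fq, alpha = z ^+ 2,
                                 mu = 'X^2 - alpha%:P & negpoly mu = mu] in
     let caseIII := exists z, [/\ z \in Fq2, z \notin Fq, alpha = - z ^+ 2,
                                 mu = 'X^2 + alpha%:P & negpoly mu = mu] in
     [\/ exists z, [/\ z \in Fq, alpha = z ^+ 2, mu = 'X - z%:P
                     & negpoly mu = 'X + z%:P],
         caseII,
         caseIII
       | (forall z, root mu z -> alpha != z ^+ 2 /\ alpha != - z ^+ 2) /\
         exists e : nat, [/\ d = (2 * e)%N,
                             forall z, root mu z -> z ^+ (q ^ e) = alpha * z^-1
                           & odd q -> mu != negpoly mu]]
     /\ (caseII -> odd q) /\ (caseIII -> odd q))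
  /\
  (* (b) *)
  (irreducible_over Fq mu -> odd d -> odd q -> negpoly mu = starpoly alpha mu ->
     exists b, b \in Fq /\ - alpha = b ^+ 2).
Proof.
move=> q d Fq Fq2; rewrite {}/Fq2 {}/Fq {}/d {}/q.
case: mu_0 => mm sep c0.
set rs := roots_of mu.
have mu_rs : mu = \prod_(z <- rs) ('X - z%:P) := rootsE mm.
have rootE x : root mu x = (x \in rs) := root_roots x mm.
have srs : size rs = (size mu).-1 := size_roots mm.
have urs : uniq rs := uniq_roots_of mm sep.
have nz : forall z, z \in rs -> z != 0.
  move=> z; rewrite -rootE; apply: contraTneq => ->.
  by rewrite /root horner_coef0.
have alphaq : alpha ^+ (p ^ n) = alpha := eqP alpha_Fq.
have alphaqi i : alpha ^+ ((p ^ n) ^ i) = alpha := fix_pow alphaq i.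
have star_root : starpoly alpha mu = mu -> forall z, z \in rs -> alpha / z \in rs.
  by move=> hs z zr; rewrite -rootE -hs starpolyE root_prod_XsubC; apply: map_f.
have A1 : starpoly alpha mu = mu -> (forall z, root mu z -> z ^+ 2 != alpha) ->
     exists e : nat, (size mu).-1 = (2 * e)%N /\ \prod_(z <- rs) z = alpha ^+ e.
  move=> hs hz; rewrite -srs; apply: invol_pairs => //; first exact: star_root.
  move=> z zr; apply/eqP => e.
  have : z ^+ 2 = alpha by rewrite expr2 -{1}e divfK // nz.
  by apply/eqP; apply: hz; rewrite rootE.
have frobinv : forall (x : F) i, x != 0 -> (alpha / x) ^+ ((p ^ n) ^ i) = alpha / x ^+ ((p ^ n) ^ i).
  by move=> x i _; rewrite exprMn exprVn alphaqi.
have getz : (1 < size mu)%N -> exists z, z \in rs.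
  move=> s1; have : (0 < size rs)%N by rewrite srs; lia.
  by case: (rs) => [|z s] // _; exists z; exact: mem_head.
pose Orb := fun irr z (zr : z \in rs) =>
  orbit charF mu_Fq mm sep irr (etrans (rootE z) zr) (algF z).
split; first exact: A1.
split.
  move=> hs irr'.
  have [s1 _] := irr'.
  have [z0 z0r] := getz s1.
  have sq_odd : forall c : F, mu = 'X^2 + c%:P -> odd (p ^ n).
    move=> c hc; apply/negPn/negP => ev; have h2 := two0 charF ev.
    have hd : mu^`() = 0.
      by rewrite hc derivD derivXn derivC addr0 /= -scaler_nat h2 scale0r.
    move: (sep); rewrite unlock hd coprimep0 => /eqp_size.
    by rewrite size_poly1 => e; move: s1; rewrite e.
  split; last first.
    split; first by move=> [z [_ _ _ hm _]]; apply: (sq_odd (- alpha)); rewrite hm polyCN.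
    by move=> [z [_ _ _ hm _]]; apply: (sq_odd alpha).
  have d1 : (1 <= (size mu).-1)%N by rewrite -ltnS prednK // ltnW.
  case: (ltngtP (size mu).-1 1) => [d0|d2|d1e]; first by move: d1; rewrite leqNgt d0.
  - case: (boolP (has (fun z => alpha == z ^+ 2) rs)) => [/hasP[z zr /eqP az]|hA].
      have [O1 O2 Op] := Orb irr' z zr.
      have zq : z ^+ (p ^ n) = - z.
        case: (@sq_pm F p n z _) => [|e|//]; first by rewrite -az.
        have := O2 1%N; rewrite expn1 e => /(_ erefl); rewrite dvdn1 => /eqP e1.
        by move: d2; rewrite e1.
      have zq2 : z ^+ ((p ^ n) ^ 2) = z.
        by rewrite -[2%N]/(1 + 1)%N -pw !expn1 zq (negq1 _ charF) zq opprK.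
      have d2e : (size mu).-1 = 2%N.
        exact: ar2 _ d2 (dvdn_leq (isT : (0 < 2)%N) (O2 2%N zq2)).
      rewrite d2e /= expn0 expr1 expn1 zq in Op.
      have hmu : mu = 'X^2 - alpha%:P.
        by rewrite mu_rs (perm_big _ Op) big_cons big_seq1 /= XX az.
      apply: Or42; exists z; split => //.
      - by apply/eqP.
      - apply/negP => /eqP e; have := O2 1%N; rewrite expn1 => /(_ e).
        by rewrite d2e.
      - rewrite negpolyE (perm_big _ (perm_map _ Op)) /= big_cons big_seq1 /=.
        by rewrite opprK mulrC XX -az hmu.
    case: (boolP (has (fun z => alpha == - z ^+ 2) rs)) => [/hasP[z zr /eqP az]|hB].
      have [O1 O2 Op] := Orb irr' z zr.
      have zq : z ^+ (p ^ n) = - z.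
        case: (@sq_pm F p n z _) => [|e|//].
          by rewrite -[z ^+ 2]opprK -az (negq1 _ charF) alphaq.
        have := O2 1%N; rewrite expn1 e => /(_ erefl); rewrite dvdn1 => /eqP e1.
        by move: d2; rewrite e1.
      have zq2 : z ^+ ((p ^ n) ^ 2) = z.
        by rewrite -[2%N]/(1 + 1)%N -pw !expn1 zq (negq1 _ charF) zq opprK.
      have d2e : (size mu).-1 = 2%N.
        exact: ar2 _ d2 (dvdn_leq (isT : (0 < 2)%N) (O2 2%N zq2)).
      rewrite d2e /= expn0 expr1 expn1 zq in Op.
      have hmu : mu = 'X^2 + alpha%:P.
        by rewrite mu_rs (perm_big _ Op) big_cons big_seq1 /= XX az polyCN.
      apply: Or43; exists z; split => //.
      - by apply/eqP.
      - apply/negP => /eqP e; have := O2 1%N; rewrite expn1 => /(_ e).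
        by rewrite d2e.
      - rewrite negpolyE (perm_big _ (perm_map _ Op)) /= big_cons big_seq1 /=.
        by rewrite opprK mulrC XX hmu az polyCN.
    apply: Or44.
    have hAB : forall z, root mu z -> alpha != z ^+ 2 /\ alpha != - z ^+ 2.
      move=> z; rewrite rootE => zr; split.
        by move/hasPn: hA => /(_ z zr).
      by move/hasPn: hB => /(_ z zr).
    split => //.
    have [e [de _]] : exists e : nat, (size mu).-1 = (2 * e)%N /\ \prod_(z <- rs) z = alpha ^+ e.
      by apply: A1 => // z /hAB [h _]; rewrite eq_sym.
    have zqe : forall z, root mu z -> z ^+ ((p ^ n) ^ e) = alpha / z.
      move=> z; rewrite rootE => zr.
      have [O1 O2 Op] := Orb irr' z zr.
      have : alpha / z \in [seq z ^+ ((p ^ n) ^ i) | i <- iota 0 (size mu).-1].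
        by rewrite -(perm_mem Op) star_root.
      case/mapP => j; rewrite mem_iota add0n => /andP[_ jd] ej.
      have z0' := nz z zr.
      have j2 : z ^+ ((p ^ n) ^ (j + j)) = z by rewrite -pw -ej frobinv // -ej inv2.
      have := O2 _ j2; rewrite de addnn -mul2n dvdn_pmul2l // => /dvdnP[c hc].
      have j0 : j != 0%N.
        apply/eqP => j0; move: ej; rewrite j0 expn0 expr1 => ej.
        have := hAB z; rewrite rootE zr => /(_ isT) [+ _].
        by rewrite expr2 -{1}ej divfK // eqxx.
      rewrite de in jd.
      have je : j = e.
        case: (ar1 _ _ _ hc jd) => c01; move: hc; rewrite c01 ?mul0n ?mul1n => hc //.
        by rewrite hc eqxx in j0.
      by rewrite -je -ej.
    exists e; split => //.
    move=> oq; apply/negP => /eqP hn.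
    have mz : - z0 \in rs by rewrite -rootE hn negpolyE root_prod_XsubC map_f.
    have [O1 O2 Op] := Orb irr' z0 z0r.
    move: mz; rewrite (perm_mem Op) => /mapP[i]; rewrite mem_iota add0n => /andP[_ id] ei.
    have i2 : z0 ^+ ((p ^ n) ^ (i + i)) = z0 by rewrite -pw -ei (negq charF) -ei opprK.
    have := O2 _ i2; rewrite de addnn -mul2n dvdn_pmul2l // => /dvdnP[c hc].
    rewrite de in id.
    have z0' := nz z0 z0r.
    case: (ar1 _ _ _ hc id) => c01; rewrite c01 in hc.
    + rewrite hc mul0n expn0 expr1 in ei.
      have : z0 *+ 2 = 0 by rewrite mulr2n -{1}ei addNr.
      move/eqP; rewrite -mulr_natr mulf_eq0 (negPf z0') /= => /eqP h2.
      by move: (two_nz charF n_gt0 oq); rewrite h2 eqxx.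
    + rewrite hc mul1n zqe ?rootE // in ei.
      have := hAB z0; rewrite rootE z0r => /(_ isT) [_].
      by rewrite expr2 -mulNr ei divfK // eqxx.
  - have [O1 O2 Op] := Orb irr' z0 z0r.
    rewrite d1e /= expn0 expr1 in Op; rewrite d1e expn1 in O1.
    have memrs x : (x \in rs) = (x == z0) by rewrite (perm_mem Op) inE.
    have az : alpha / z0 = z0 by apply/eqP; rewrite -memrs star_root.
    apply: Or41; exists z0; split.
    - by apply/eqP.
    - by rewrite expr2 -{1}az divfK // nz.
    - by rewrite mu_rs (perm_big _ Op) big_seq1.
    - by rewrite negpolyE (perm_big _ (perm_map _ Op)) /= big_seq1 polyCN opprK.
move=> irr' od oq hn.
have [s1 _] := irr'.
have [z0 z0r] := getz s1.
have [O1 O2 Op] := Orb irr' z0 z0r.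
have : alpha / z0 \in [seq - w | w <- rs].
  by rewrite -root_prod_XsubC -negpolyE hn starpolyE root_prod_XsubC; exact: (map_f (fun z => alpha * z^-1) z0r).
case/mapP => w wr ew.
move: wr; rewrite (perm_mem Op) => /mapP[j]; rewrite mem_iota add0n => /andP[_ jd] ej.
have z0' := nz z0 z0r.
have j2 : z0 ^+ ((p ^ n) ^ (j + j)) = z0.
  rewrite -pw -ej (_ : w = - (alpha / z0)); last by rewrite ew opprK.
  rewrite (negq charF) frobinv // -ej.
  by rewrite -[w]opprK -ew invrN mulrN opprK inv2.
have := O2 _ j2; rewrite addnn -mul2n Gauss_dvdr ?coprimen2 // => dj.
have j0 : j = 0%N.
  case: (posnP j) => // jp.
  by move: (dvdn_leq jp dj); rewrite leqNgt jd.
rewrite j0 expn0 expr1 in ej.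
have hz2 : - alpha = z0 ^+ 2.
  have : alpha = - z0 * z0 by rewrite -{1}ej -ew divfK.
  by move=> ->; rewrite mulNr opprK expr2.
exists z0; split => //.
have : (z0 ^+ 2) ^+ (p ^ n) = z0 ^+ 2 by rewrite -hz2 (negq1 _ charF) alphaq.
case/(@sq_pm F p n) => [e|e]; first by apply/eqP.
have zq2 : z0 ^+ ((p ^ n) ^ 2) = z0.
  by rewrite -[2%N]/(1 + 1)%N -pw !expn1 e (negq1 _ charF) e opprK.
have dl := dvdn_leq (isT : (0 < 2)%N) (O2 _ zq2).
have d1 : (size mu).-1 = 1%N.
  by move: od dl; case: ((size mu).-1) => [|[|[|]]].
by rewrite d1 expn1 in O1; apply/eqP.
Qed.
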